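(* Let $T$ be a CPTP map on $\mathfrak{H}(\mathcal{H})$, $\mathcal{H}=\mathcal{H}_S\oplus\mathcal{H}_R$ orthogonal, with $\mathcal{H}_S=\bigoplus_{i=1}^K\mathcal{H}_{S_i}$ an orthogonal decomposition into invariant subspaces, and assume moreover that $\mathcal{H}_S$ is GAS. Then $\mathrm{id}-T_R$ is invertible on $\mathfrak{H}_R$ and for every density operator $\rho$ and every $i$, $$\lim_{n\to\infty}\mathrm{Tr}(\Pi_{S_i}T^n(\rho))=\mathrm{Tr}(\Pi_{S_i}\rho_S)+\mathrm{Tr}\big(\Pi_{S_i}\,T_{SR}\big((\mathrm{id}-T_R)^{-1}(\rho_R)\big)\big),$$ where $\rho_S=\Pi_S\rho\Pi_S$ and $\rho_R=\Pi_R\rho\Pi_R$.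
   Context: $\mathcal{H}$ is a finite-dimensional complex Hilbert space; $T$ is CPTP: $T(\rho)=\sum_kM_k\rho M_k^\dagger$, $\sum_kM_k^\dagger M_k=I$. A subspace is invariant for $T$ if every PSD $\rho$ supported in it is mapped to an operator supported in it. $\Pi_S,\Pi_R,\Pi_{S_i}$ are the orthogonal projections onto $\mathcal{H}_S,\mathcal{H}_R,\mathcal{H}_{S_i}$. An invariant $\mathcal{H}_S$ is GAS if $\lim_n\|T^n(\rho)-\Pi_ST^n(\rho)\Pi_S\|=0$ for every density operator $\rho$. $\mathfrak{H}_R$ denotes the Hermitian operators $A$ with $A=\Pi_RA\Pi_R$; $T_R:\mathfrak{H}_R\to\mathfrak{H}_R$, $T_R(A)=\Pi_RT(A)\Pi_R$; $T_{SR}:\mathfrak{H}_R\to$ (Hermitian operators supported on $\mathcal{H}_S$), $T_{SR}(A)=\Pi_ST(A)\Pi_S$. *)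

(* Defs.v *)
(* Finite-dimensional complex Hilbert space H = C^n,
   operators = n x n matrices over a numClosedFieldType C (e.g. algC). *)
From HB Require Import structures.
From mathcomp Require Import all_boot all_order all_algebra.
Set Implicit Arguments. Unset Strict Implicit. Unset Printing Implicit Defensive.
Import Order.TTheory GRing.Theory Num.Theory.
Local Open Scope ring_scope.

Section QDefs.
Variables (C : numClosedFieldType) (n : nat).

Definition adj (m p : nat) (A : 'M[C]_(m, p)) : 'M[C]_(p, m) :=
  (map_mx (fun z => z^*) A)^T.

Definition hermitian (A : 'M[C]_n) : Prop := adj A = A.

Definition psd (A : 'M[C]_n) : Prop :=
  hermitian A /\ forall v : 'cV[C]_n, 0 <= (adj v *m A *m v) 0 0.

Definition density (rho : 'M[C]_n) : Prop := psd rho /\ \tr rho = 1.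

Definition orth_proj (P : 'M[C]_n) : Prop := hermitian P /\ P *m P = P.

(* CPTP map given by a finite family of Kraus operators *)
Definition kraus_TP (Ms : seq 'M[C]_n) : Prop :=
  \sum_(M <- Ms) adj M *m M = 1%:M.

Definition kraus_map (Ms : seq 'M[C]_n) (rho : 'M[C]_n) : 'M[C]_n :=
  \sum_(M <- Ms) M *m rho *m adj M.

Definition supported_in (P A : 'M[C]_n) : Prop := P *m A *m P = A.

Definition invariant_subspace (T : 'M[C]_n -> 'M[C]_n) (P : 'M[C]_n) : Prop :=
  forall rho, psd rho -> supported_in P rho -> supported_in P (T rho).

Definition cvg_to (u : nat -> C) (l : C) : Prop :=
  forall eps : C, 0 < eps -> exists N : nat, forall m, (N <= m)%N -> `|u m - l| < eps.

(* convergence of matrix sequences (entrywise; all norms are equivalent in finite dim) *)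
Definition mx_cvg_to (u : nat -> 'M[C]_n) (L : 'M[C]_n) : Prop :=
  forall i j, cvg_to (fun m => u m i j) (L i j).

Definition GAS (T : 'M[C]_n -> 'M[C]_n) (P : 'M[C]_n) : Prop :=
  forall rho, density rho ->
    mx_cvg_to (fun m => iter m T rho - P *m iter m T rho *m P) 0.

Definition in_HR (PR A : 'M[C]_n) : Prop := hermitian A /\ supported_in PR A.
Definition T_R (T : 'M[C]_n -> 'M[C]_n) (PR A : 'M[C]_n) : 'M[C]_n := PR *m T A *m PR.
Definition T_SR (T : 'M[C]_n -> 'M[C]_n) (PS A : 'M[C]_n) : 'M[C]_n := PS *m T A *m PS.

Definition id_minus_TR_invertible (T : 'M[C]_n -> 'M[C]_n) (PR : 'M[C]_n) : Prop :=
  forall B, in_HR PR B ->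
    exists X, [/\ in_HR PR X, X - T_R T PR X = B &
      forall Y, in_HR PR Y -> Y - T_R T PR Y = B -> Y = X].

End QDefs.

(* Main.v *)
Require Import Defs.
From HB Require Import structures.
From mathcomp Require Import all_boot all_order all_algebra.
From mathcomp Require Import ring.
Set Implicit Arguments. Unset Strict Implicit. Unset Printing Implicit Defensive.
Import Order.TTheory GRing.Theory Num.Theory.
Local Open Scope ring_scope.

Section Aux.
Variable C : numClosedFieldType.

Lemma conjD' (x y : C) : (x + y)^* = x^* + y^*. Proof. exact: rmorphD. Qed.
Lemma conjM' (x y : C) : (x * y)^* = x^* * y^*. Proof. exact: rmorphM. Qed.

Lemma adjE m p (A : 'M[C]_(m,p)) i j : adj A i j = (A j i)^*.
Proof. by rewrite /adj !mxE. Qed.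

Lemma adjK m p (A : 'M[C]_(m,p)) : adj (adj A) = A.
Proof. by apply/matrixP=> i j; rewrite !adjE conjCK. Qed.

Lemma adjM m p q (A : 'M[C]_(m,p)) (B : 'M[C]_(p,q)) : adj (A *m B) = adj B *m adj A.
Proof.
apply/matrixP=> i j; rewrite /adj !mxE rmorph_sum; apply: eq_bigr => k _.
by rewrite !mxE rmorphM mulrC.
Qed.

Lemma adjD m p (A B : 'M[C]_(m,p)) : adj (A + B) = adj A + adj B.
Proof. by apply/matrixP=> i j; rewrite /adj !mxE rmorphD. Qed.

Lemma adjN m p (A : 'M[C]_(m,p)) : adj (- A) = - adj A.
Proof. by apply/matrixP=> i j; rewrite /adj !mxE rmorphN. Qed.

Lemma adjB m p (A B : 'M[C]_(m,p)) : adj (A - B) = adj A - adj B.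
Proof. by rewrite adjD adjN. Qed.

Lemma adjZ m p a (A : 'M[C]_(m,p)) : adj (a *: A) = a^* *: adj A.
Proof. by apply/matrixP=> i j; rewrite /adj !mxE rmorphM. Qed.

Lemma adj0 m p : adj (0 : 'M[C]_(m,p)) = 0.
Proof. by apply/matrixP=> i j; rewrite /adj !mxE rmorph0. Qed.

Lemma adj_sum m p (I : Type) (r : seq I) (P : pred I) (F : I -> 'M[C]_(m,p)) :
  adj (\sum_(i <- r | P i) F i) = \sum_(i <- r | P i) adj (F i).
Proof.
elim: r => [|x r IH]; first by rewrite !big_nil adj0.
by rewrite !big_cons; case: (P x); rewrite ?adjD IH.
Qed.

Lemma adj1 m : adj (1%:M : 'M[C]_m) = 1%:M.
Proof. by apply/matrixP=> i j; rewrite /adj !mxE eq_sym conjC_nat. Qed.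

Lemma adj_delta m p (i : 'I_m) (j : 'I_p) : adj (delta_mx i j : 'M[C]_(m,p)) = delta_mx j i.
Proof. by apply/matrixP=> a b; rewrite /adj !mxE conjC_nat andbC. Qed.

Lemma mul_adj_diag m p (A : 'M[C]_(m,p)) i : (A *m adj A) i i = \sum_k `|A i k| ^+ 2.
Proof. by rewrite !mxE; apply: eq_bigr => k _; rewrite adjE normCK. Qed.

Lemma mul_adj_diag_ge0 m p (A : 'M[C]_(m,p)) i : 0 <= (A *m adj A) i i.
Proof. by rewrite mul_adj_diag; apply: sumr_ge0 => k _; rewrite exprn_ge0. Qed.

Lemma tr_adj_ge0 m (A : 'cV[C]_m) : 0 <= \tr (A *m adj A).
Proof. by apply: sumr_ge0 => i _; apply: mul_adj_diag_ge0. Qed.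

Lemma tr_adj_eq0 m (A : 'cV[C]_m) : \tr (A *m adj A) = 0 -> A = 0.
Proof.
move=> h; apply/matrixP=> i k; rewrite mxE.
have h1 := psumr_eq0P (fun i _ => mul_adj_diag_ge0 A i) h (erefl true : true).
have := h1 i; rewrite mul_adj_diag => h2.
have := psumr_eq0P (fun k _ => exprn_ge0 2 (normr_ge0 (A i k))) h2 (erefl true : true).
by move=> /(_ k) /eqP; rewrite expf_eq0 /= normr_eq0 => /eqP.
Qed.

Lemma sum_seq_ge0_eq0 (I : eqType) (r : seq I) (F : I -> C) :
  (forall x, 0 <= F x) -> \sum_(x <- r) F x = 0 -> forall x, x \in r -> F x = 0.
Proof.
move=> h0; elim: r => [|y r IH] //; rewrite big_cons => /eqP.
rewrite paddr_eq0 ?sumr_ge0 // => /andP[/eqP a /eqP b] x.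
by rewrite inE => /orP[/eqP->//|]; exact: IH.
Qed.

Definition null (u : nat -> C) := cvg_to u 0.

Lemma null_ext u v : (forall m, u m = v m) -> null u -> null v.
Proof.
move=> e h eps he; have [N hN] := h eps he; exists N => m hm; rewrite -e; exact: hN.
Qed.

Lemma null0 : null (fun _ => 0).
Proof. by move=> eps he; exists 0%N => m _; rewrite subr0 normr0. Qed.

Lemma null_add u v : null u -> null v -> null (fun m => u m + v m).
Proof.
move=> hu hv eps eps0.
have e2 : 0 < eps / 2 by rewrite divr_gt0 // ltr0n.
have [N1 h1] := hu _ e2; have [N2 h2] := hv _ e2.
exists (maxn N1 N2) => m; rewrite geq_max => /andP[m1 m2].
have := h1 m m1; have := h2 m m2; rewrite !subr0 => a b.
apply: (le_lt_trans (ler_normD _ _)).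
by rewrite [eps]splitr; apply: ltrD.
Qed.

Lemma null_scale c u : null u -> null (fun m => c * u m).
Proof.
move=> hu eps eps0.
have hc : 0 < `|c| + 1 := ltr_wpDl (normr_ge0 c) ltr01.
have e1 : 0 < eps / (`|c| + 1) by rewrite divr_gt0.
have [N h] := hu _ e1; exists N => m hm.
have := h m hm; rewrite !subr0 normrM => hlt.
apply: (le_lt_trans (y := (`|c| + 1) * `|u m|)).
  by rewrite ler_wpM2r ?normr_ge0 // lerDl ler01.
by rewrite -(ltr_pM2l hc) in hlt; rewrite (lt_le_trans hlt) // mulrC divfK // gt_eqF.
Qed.

Lemma null_sum (I : Type) (r : seq I) (P : pred I) (F : I -> nat -> C) :
  (forall i, P i -> null (F i)) -> null (fun m => \sum_(i <- r | P i) F i m).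
Proof.
move=> h; elim: r => [|x r IH].
  by apply: (null_ext _ null0) => m; rewrite big_nil.
case Px: (P x).
  by apply: (null_ext _ (null_add (h x Px) IH)) => m; rewrite big_cons Px.
by apply: (null_ext _ IH) => m; rewrite big_cons Px.
Qed.

Lemma cvg_of_null u l : null (fun m => u m - l) -> cvg_to u l.
Proof.
move=> h eps he; have [N hN] := h eps he; exists N => m hm.
by have := hN m hm; rewrite subr0.
Qed.

Lemma null_const z : null (fun _ => z) -> z = 0.
Proof.
move=> h; apply/eqP; apply/negPn/negP => hz.
have [N hN] := h `|z| ltac:(by rewrite normr_gt0).
by have := hN N (leqnn N); rewrite subr0 ltxx.
Qed.


Definition mx_null p q (Y : nat -> 'M[C]_(p,q)) := forall i j, null (fun m => Y m i j).

Lemma mx_null_ext p q (Y Z : nat -> 'M[C]_(p,q)) : (forall m, Y m = Z m) -> mx_null Y -> mx_null Z.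
Proof. by move=> e h i j; apply: (null_ext _ (h i j)) => m; rewrite e. Qed.

Lemma mx_null_mull p q r (A : 'M[C]_(r,p)) (Y : nat -> 'M[C]_(p,q)) :
  mx_null Y -> mx_null (fun m => A *m Y m).
Proof.
move=> h i j; apply: (@null_ext (fun m => \sum_k A i k * Y m k j)).
  by move=> m; rewrite mxE.
by apply: null_sum => k _; apply: null_scale.
Qed.

Lemma mx_null_mulr p q r (B : 'M[C]_(q,r)) (Y : nat -> 'M[C]_(p,q)) :
  mx_null Y -> mx_null (fun m => Y m *m B).
Proof.
move=> h i j; apply: (@null_ext (fun m => \sum_k B k j * Y m i k)).
  by move=> m; rewrite mxE; apply: eq_bigr => k _; rewrite mulrC.
by apply: null_sum => k _; apply: null_scale.
Qed.

Lemma mx_null_add p q (Y Z : nat -> 'M[C]_(p,q)) :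
  mx_null Y -> mx_null Z -> mx_null (fun m => Y m + Z m).
Proof.
move=> h1 h2 i j; apply: (@null_ext (fun m => Y m i j + Z m i j)).
  by move=> m; rewrite mxE.
exact: null_add.
Qed.

Lemma mx_null_scale p q c (Y : nat -> 'M[C]_(p,q)) :
  mx_null Y -> mx_null (fun m => c *: Y m).
Proof.
move=> h i j; apply: (@null_ext (fun m => c * Y m i j)).
  by move=> m; rewrite mxE.
exact: null_scale.
Qed.

Lemma mx_null_sum p q (I : Type) (r : seq I) (P : pred I) (F : I -> nat -> 'M[C]_(p,q)) :
  (forall i, P i -> mx_null (F i)) -> mx_null (fun m => \sum_(i <- r | P i) F i m).
Proof.
move=> h i j; apply: (@null_ext (fun m => \sum_(k <- r | P k) F k m i j)).
  by move=> m; rewrite summxE.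
by apply: null_sum => k Pk; apply: h.
Qed.

Lemma mx_null_tr p (Y : nat -> 'M[C]_p) : mx_null Y -> null (fun m => \tr (Y m)).
Proof. by move=> h; apply: null_sum => i _; apply: h. Qed.

Lemma mx_null_const p q (Z : 'M[C]_(p,q)) : mx_null (fun _ => Z) -> Z = 0.
Proof. by move=> h; apply/matrixP => i j; rewrite mxE; apply: null_const (h i j). Qed.

Lemma mx_null0 p q : mx_null (fun _ => (0 : 'M[C]_(p,q))).
Proof.
move=> i j; apply: (@null_ext (fun _ => 0)); last exact: null0.
by move=> m; rewrite mxE.
Qed.

Definition islin p (f : 'M[C]_p -> 'M[C]_p) := forall a A B, f (a *: A + B) = a *: f A + f B.

Section Lin.
Variables (p : nat) (f : 'M[C]_p -> 'M[C]_p) (hf : islin f).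
Lemma lin0 : f 0 = 0.
Proof.
have := hf 1 0 0; rewrite !scale1r addr0 => e.
by apply: (addrI (f 0)); rewrite addr0 -e.
Qed.
Lemma linD A B : f (A + B) = f A + f B.
Proof. by have := hf 1 A B; rewrite !scale1r. Qed.
Lemma linZ a A : f (a *: A) = a *: f A.
Proof. by have := hf a A 0; rewrite !addr0 lin0 addr0. Qed.
Lemma linN A : f (- A) = - f A.
Proof. by rewrite -scaleN1r linZ scaleN1r. Qed.
Lemma linB A B : f (A - B) = f A - f B.
Proof. by rewrite linD linN. Qed.
Lemma lin_sum (I : Type) (r : seq I) (P : pred I) (F : I -> 'M[C]_p) :
  f (\sum_(i <- r | P i) F i) = \sum_(i <- r | P i) f (F i).
Proof.
elim: r => [|x r IH]; first by rewrite !big_nil lin0.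
by rewrite !big_cons; case: (P x); rewrite ?linD IH.
Qed.
Lemma iter_lin m : islin (iter m f).
Proof. elim: m => [|m IH] a A B //=; by rewrite IH hf. Qed.
End Lin.

End Aux.
Section Kraus.
Variables (C : numClosedFieldType) (n : nat) (Ms : seq 'M[C]_n).
Local Notation T := (kraus_map Ms).

Lemma kraus_lin : islin T.
Proof.
move=> a A B; rewrite /kraus_map scaler_sumr -big_split; apply: eq_bigr => M _.
by rewrite mulmxDr mulmxDl -scalemxAr -scalemxAl.
Qed.

Lemma kraus_adj A : T (adj A) = adj (T A).
Proof.
rewrite /kraus_map adj_sum; apply: eq_bigr => M _.
by rewrite !adjM adjK mulmxA.
Qed.

Lemma psd_rank1 (u : 'cV[C]_n) : psd (u *m adj u).
Proof.
split; first by rewrite /Defs.hermitian adjM adjK.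
move=> v; have -> : adj v *m (u *m adj u) *m v = (adj v *m u) *m adj (adj v *m u).
  by rewrite adjM adjK !mulmxA.
exact: mul_adj_diag_ge0.
Qed.

Lemma tr_sum (I : Type) (r : seq I) (F : I -> 'M[C]_n) :
  \tr (\sum_(i <- r) F i) = \sum_(i <- r) \tr (F i).
Proof.
elim: r => [|x r IH]; first by rewrite !big_nil /mxtrace big1 // => i _; rewrite mxE.
by rewrite !big_cons mxtraceD IH.
Qed.

Lemma kraus_inv (P : 'M[C]_n) : orth_proj P -> invariant_subspace T P ->
  forall M, M \in Ms -> M *m P = P *m M *m P.
Proof.
move=> [hP PP] hinv M hM.
pose Q := 1%:M - P.
have QP : Q *m P = 0 by rewrite /Q mulmxBl mul1mx PP subrr.
have PQ : P *m Q = 0 by rewrite /Q mulmxBr mulmx1 PP subrr.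
have hQ : adj Q = Q by rewrite /Q adjB adj1 hP.
suff : Q *m M *m P = 0.
  by rewrite /Q !mulmxBl !mul1mx => /eqP; rewrite subr_eq0 => /eqP.
have key : forall v : 'cV[C]_n, Q *m M *m P *m v = 0.
  move=> v; pose u := P *m v.
  have hrho : supported_in P (u *m adj u).
    by rewrite /supported_in /u adjM hP !mulmxA PP -!mulmxA PP.
  have := hinv _ (psd_rank1 u) hrho; rewrite /supported_in => e.
  have e2 : Q *m T (u *m adj u) *m Q = 0.
    by rewrite -e !mulmxA QP !mul0mx.
  have e3 : \tr (Q *m T (u *m adj u) *m Q) =
     \sum_(M' <- Ms) \tr ((Q *m M' *m u) *m adj (Q *m M' *m u)).
    rewrite /kraus_map mulmx_sumr mulmx_suml tr_sum; apply: eq_bigr => M' _.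
    by rewrite !adjM hQ !mulmxA.
  rewrite e2 mxtrace0 in e3.
  have := sum_seq_ge0_eq0 (fun M' => tr_adj_ge0 (Q *m M' *m u)) (esym e3) hM.
  by move/tr_adj_eq0; rewrite /u !mulmxA.
apply/matrixP => i j.
have := congr1 (fun w : 'cV[C]_n => w i 0) (key (delta_mx j 0)).
by rewrite -colE !mxE.
Qed.

End Kraus.
Section Main.
Variables (C : numClosedFieldType) (n K : nat) (Ms : seq 'M[C]_n) (P : 'I_K -> 'M[C]_n).
Hypotheses (hTP : kraus_TP Ms) (hP : forall i, orth_proj (P i))
  (hort : forall i j, i != j -> P i *m P j = 0)
  (hinv : forall i, invariant_subspace (kraus_map Ms) (P i)).
Local Notation T := (kraus_map Ms).
Variables (PS PR : 'M[C]_n).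
Hypotheses (PSdef : PS = \sum_(i < K) P i) (PRdef : PR = 1%:M - PS).
Local Notation TR := (T_R (kraus_map Ms) PR).

Lemma PiH i : adj (P i) = P i. Proof. by case: (hP i). Qed.
Lemma PiP i : P i *m P i = P i. Proof. by case: (hP i). Qed.
Lemma PSPi i : PS *m P i = P i.
Proof.
rewrite PSdef mulmx_suml (bigD1 i) //= PiP big1 ?addr0 // => j hj.
by apply: hort.
Qed.
Lemma PiPS i : P i *m PS = P i.
Proof.
rewrite PSdef mulmx_sumr (bigD1 i) //= PiP big1 ?addr0 // => j hj.
by apply: hort; rewrite eq_sym.
Qed.
Lemma PSH : adj PS = PS.
Proof. by rewrite PSdef adj_sum; apply: eq_bigr => i _; apply: PiH. Qed.
Lemma PSPS : PS *m PS = PS.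
Proof. by rewrite {2}PSdef mulmx_sumr [RHS]PSdef; apply: eq_bigr => i _; apply: PSPi. Qed.
Lemma PRH : adj PR = PR.
Proof. by rewrite PRdef adjB adj1 PSH. Qed.
Lemma PRPS : PR *m PS = 0.
Proof. by rewrite PRdef mulmxBl mul1mx PSPS subrr. Qed.
Lemma PSPR : PS *m PR = 0.
Proof. by rewrite PRdef mulmxBr mulmx1 PSPS subrr. Qed.
Lemma PRPR : PR *m PR = PR.
Proof. by rewrite {1}PRdef mulmxBl mul1mx PSPR subr0. Qed.
Lemma PRPi i : PR *m P i = 0.
Proof. by rewrite PRdef mulmxBl mul1mx PSPi subrr. Qed.
Lemma PiPR i : P i *m PR = 0.
Proof. by rewrite PRdef mulmxBr mulmx1 PiPS subrr. Qed.
Lemma PSPR1 : PS + PR = 1%:M.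
Proof. by rewrite PRdef addrC subrK. Qed.

Lemma lPRPR m (X : 'M[C]_(m, n)) : X *m PR *m PR = X *m PR.
Proof. by rewrite -mulmxA PRPR. Qed.

Lemma kM i M : M \in Ms -> M *m P i = P i *m M *m P i.
Proof. by apply: kraus_inv. Qed.

Lemma PRMPS M : M \in Ms -> PR *m M *m PS = 0.
Proof.
move=> hM; rewrite PSdef mulmx_sumr big1 // => i _.
by rewrite -mulmxA kM // !mulmxA PRPi !mul0mx.
Qed.

Lemma PRM M : M \in Ms -> PR *m M = PR *m M *m PR.
Proof.
by move=> hM; rewrite -{1}[PR *m M]mulmx1 -PSPR1 mulmxDr PRMPS // add0r.
Qed.

Lemma MPR M : M \in Ms -> adj M *m PR = PR *m adj M *m PR.
Proof.
move=> hM; have := congr1 (@adj C n n) (PRM hM).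
by rewrite !adjM PRH mulmxA.
Qed.

Lemma TR_proj A : PR *m T A *m PR = PR *m T (PR *m A *m PR) *m PR.
Proof.
rewrite /kraus_map !mulmx_sumr !mulmx_suml big_seq [RHS]big_seq.
apply: eq_bigr => M hM.
have e : forall X, PR *m (M *m X *m adj M) *m PR = (PR *m M) *m X *m (adj M *m PR).
  by move=> X; rewrite !mulmxA.
by rewrite !e PRM // MPR // !mulmxA !lPRPR.
Qed.

Lemma iter_TR m A : PR *m iter m T A *m PR = iter m TR (PR *m A *m PR).
Proof.
elim: m => [|m IH] //=.
by rewrite TR_proj IH.
Qed.

Lemma TR_lin : islin TR.
Proof.
move=> a A B; rewrite /T_R kraus_lin mulmxDr mulmxDl -scalemxAr -scalemxAl.
by [].
Qed.

Lemma TR_adj A : TR (adj A) = adj (TR A).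
Proof. by rewrite /T_R kraus_adj !adjM PRH mulmxA. Qed.


Definition Dm i := \sum_(M <- Ms) adj M *m P i *m M.

Lemma trD i A : \tr (P i *m T A) = \tr (Dm i *m A).
Proof.
rewrite /kraus_map /Dm mulmx_sumr mulmx_suml !tr_sum; apply: eq_bigr => M _.
by rewrite !mulmxA mxtrace_mulC !mulmxA.
Qed.

Lemma Dm_Pi i : Dm i *m P i = P i.
Proof.
rewrite /Dm mulmx_suml (eq_big_seq (fun M => adj M *m M *m P i)).
  by rewrite -mulmx_suml hTP mul1mx.
by move=> M hM; rewrite -!mulmxA (mulmxA (P i)) -kM // mulmxA.
Qed.

Lemma Dm_Pj i j : i != j -> Dm i *m P j = 0.
Proof.
move=> hij; rewrite /Dm mulmx_suml big1_seq // => M /andP[_ hM].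
rewrite -!mulmxA kM // !mulmxA -[adj M *m P i *m P j]mulmxA hort //.
by rewrite mulmx0 !mul0mx.
Qed.

Lemma Dm_PS i : Dm i *m PS = P i.
Proof.
rewrite PSdef mulmx_sumr (bigD1 i) //= Dm_Pi big1 ?addr0 // => j hj.
by apply: Dm_Pj; rewrite eq_sym.
Qed.

Lemma DmH i : adj (Dm i) = Dm i.
Proof.
by rewrite /Dm adj_sum; apply: eq_bigr => M _; rewrite !adjM adjK PiH mulmxA.
Qed.

Lemma PS_Dm i : PS *m Dm i = P i.
Proof. by have := congr1 (@adj C n n) (Dm_PS i); rewrite adjM PSH DmH PiH. Qed.

Lemma Dm_dec i : Dm i = P i + PR *m Dm i *m PR.
Proof.
rewrite PRdef mulmxBl mul1mx mulmxBr mulmx1 mulmxBl PS_Dm Dm_PS PiPS.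
by rewrite subrr subr0 addrC subrK.
Qed.

Lemma trstep i A : \tr (P i *m T A) = \tr (P i *m A) + \tr (P i *m T (PR *m A *m PR)).
Proof.
rewrite !trD {1}Dm_dec mulmxDl mxtraceD; congr (_ + _).
by rewrite -!mulmxA mxtrace_mulC !mulmxA.
Qed.

Lemma tr_SR i B : \tr (P i *m T B) = \tr (P i *m T_SR T PS B).
Proof.
by rewrite /T_SR !mulmxA PiPS [RHS]mxtrace_mulC mulmxA PSPi.
Qed.

Lemma tr0 i rho : \tr (P i *m rho) = \tr (P i *m (PS *m rho *m PS)).
Proof.
by rewrite !mulmxA PiPS [RHS]mxtrace_mulC mulmxA PSPi.
Qed.

Definition gf i Y := \tr (P i *m T_SR T PS Y).

Lemma gB i Y Z : gf i (Y - Z) = gf i Y - gf i Z.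
Proof.
by rewrite /gf /T_SR (linB (@kraus_lin _ _ Ms)) mulmxBr mulmxBl mulmxBr raddfB.
Qed.

Lemma formula i rho X : X - TR X = PR *m rho *m PR -> forall m,
  \tr (P i *m iter m T rho) = \tr (P i *m rho) + gf i X - gf i (iter m TR X).
Proof.
move=> hX; elim=> [|m IH]; first by rewrite /= addrK.
rewrite iterS trstep IH iter_TR -hX (linB (iter_lin TR_lin m)) -iterSr.
rewrite tr_SR -/(gf i _) gB.
ring.
Qed.


Lemma sandwich A : PR *m (PR *m A *m PR) *m PR = PR *m A *m PR.
Proof. by rewrite !mulmxA PRPR lPRPR. Qed.

Definition good Y := mx_null (fun m => iter m TR Y).

Lemma good_add Y Z : good Y -> good Z -> good (Y + Z).
Proof.
move=> h1 h2; apply: (mx_null_ext _ (mx_null_add h1 h2)) => m.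
by rewrite (linD (iter_lin TR_lin m)).
Qed.

Lemma good_scale c Y : good Y -> good (c *: Y).
Proof.
move=> h; apply: (mx_null_ext _ (mx_null_scale c h)) => m.
by rewrite (linZ (iter_lin TR_lin m)).
Qed.

Lemma good_sub Y Z : good Y -> good Z -> good (Y - Z).
Proof. by move=> h1 h2; rewrite -scaleN1r; apply: good_add => //; apply: good_scale. Qed.

Lemma good_sum (I : Type) (r : seq I) (F : I -> 'M[C]_n) :
  (forall i, good (F i)) -> good (\sum_(i <- r) F i).
Proof.
move=> h; elim: r => [|x r IH].
  rewrite big_nil /good; apply: (@mx_null_ext _ _ _ (fun _ => 0)).
    by move=> m; rewrite (lin0 (iter_lin TR_lin m)).
  exact: mx_null0.
by rewrite big_cons; apply: good_add.
Qed.

Lemma good_rank1 (hG : GAS T PS) (u : 'cV[C]_n) : PR *m u = u -> good (u *m adj u).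
Proof.
move=> hu.
set t := \tr (u *m adj u).
have t0 : 0 <= t := tr_adj_ge0 u.
case: (eqVneq t 0) => [/tr_adj_eq0 -> | tn0].
  rewrite /good; apply: (@mx_null_ext _ _ _ (fun _ => 0)).
    by move=> m; rewrite mul0mx (lin0 (iter_lin TR_lin m)).
  exact: mx_null0.
pose rho := t^-1 *: (u *m adj u).
have hrho : density rho.
  split; [split|].
  - by rewrite /Defs.hermitian /rho adjZ adjM adjK geC0_conj // invr_ge0.
  - move=> v; rewrite /rho -scalemxAr -scalemxAl mxE.
    by apply: mulr_ge0; [rewrite invr_ge0 | apply: (psd_rank1 u).2].
  - by rewrite /rho mxtraceZ mulVf.
have hsup : PR *m rho *m PR = rho.
  rewrite /rho -scalemxAr -scalemxAl; congr (_ *: _).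
  by rewrite mulmxA hu -mulmxA -PRH -adjM hu.
have hN : mx_null (fun m => iter m T rho - PS *m iter m T rho *m PS).
  by move=> i j; have := hG _ hrho i j; rewrite mxE.
have hN2 := mx_null_mulr PR (mx_null_mull PR hN).
apply: (mx_null_ext _ (mx_null_scale t hN2)) => m /=.
rewrite mulmxBr mulmxBl !mulmxA PRPS !mul0mx subr0 iter_TR hsup.
by rewrite -(linZ (iter_lin TR_lin m)) /rho scalerA divff // scale1r.
Qed.

Lemma polA (u w : 'cV[C]_n) :
  u *m adj w + w *m adj u = (u + w) *m adj (u + w) - u *m adj u - w *m adj w.
Proof.
apply/matrixP => a b; rewrite !mxE !big_ord1 !mxE rmorphD.
ring.
Qed.

Lemma polB (u w : 'cV[C]_n) :
  u *m adj w - w *m adj u = 'i *: ((u + 'i *: w) *m adj (u + 'i *: w) - u *m adj u - w *m adj w).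
Proof.
apply/matrixP => a b; rewrite !mxE !big_ord1 !mxE conjD' conjM' conjCi.
set x := u a 0; set y := w b 0; set z := w a 0; set v := u b 0.
have hi : 'i * 'i = -1 :> C by rewrite -expr2 sqrCi.
transitivity (- ('i * 'i) * (x * y^*) + ('i * 'i) * (z * v^*)
   - ('i * 'i + 1) * ('i * z * y^*)); first by rewrite hi; ring.
ring.
Qed.


Lemma half_split (x y : 'M[C]_n) : x = 2^-1 *: ((x + y) + (x - y)).
Proof.
have -> : (x + y) + (x - y) = 2%:R *: x.
  by rewrite scaler_nat mulr2n (addrACA x y x (- y)) subrr addr0.
apply/matrixP => i j; rewrite !mxE.
have h2 : (2%:R : C) != 0 by rewrite pnatr_eq0.
by field.
Qed.

Lemma good_uw (hG : GAS T PS) (u w : 'cV[C]_n) : PR *m u = u -> PR *m w = w ->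
  good (u *m adj w).
Proof.
move=> hu hw; rewrite (half_split (u *m adj w) (w *m adj u)); apply: good_scale; apply: good_add.
  rewrite polA; apply: good_sub; first apply: good_sub; apply: good_rank1 => //.
  by rewrite mulmxDr hu hw.
rewrite polB; apply: good_scale.
apply: good_sub; first apply: good_sub.
- apply: good_rank1 => //.
  by rewrite mulmxDr hu -scalemxAr hw.
- exact: good_rank1.
- exact: good_rank1.
Qed.

Lemma decomp X : PR *m X *m PR = X ->
  X = \sum_a \sum_b X a b *: ((PR *m delta_mx a (0 : 'I_1)) *m adj (PR *m delta_mx b (0 : 'I_1))).
Proof.
move=> hX; rewrite -{1}hX {1}(matrix_sum_delta X) mulmx_sumr mulmx_suml.
apply: eq_bigr => a _; rewrite mulmx_sumr mulmx_suml; apply: eq_bigr => b _.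
rewrite -scalemxAr -scalemxAl; congr (_ *: _).
by rewrite adjM adj_delta PRH -(mul_delta_mx (0 : 'I_1)) !mulmxA.
Qed.

Lemma goodR (hG : GAS T PS) X : PR *m X *m PR = X -> good X.
Proof.
move=> hX; rewrite (decomp hX); apply: good_sum => a; apply: good_sum => b.
by apply: good_scale; apply: good_uw => //; rewrite mulmxA PRPR.
Qed.

Lemma uniq0 (hG : GAS T PS) Z : PR *m Z *m PR = Z -> Z - TR Z = 0 -> Z = 0.
Proof.
move=> hZ /eqP; rewrite subr_eq0 => /eqP hT.
have e : forall m, iter m TR Z = Z by elim=> [|m IH] //=; rewrite IH -hT.
apply: mx_null_const; apply: (mx_null_ext e); exact: goodR.
Qed.


Definition Ff (Y : 'M[C]_n) := PR *m Y *m PR - TR (PR *m Y *m PR) + (Y - PR *m Y *m PR).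

Lemma Ff_lin : islin Ff.
Proof.
move=> a A B; rewrite /Ff.
have hS : PR *m (a *: A + B) *m PR = a *: (PR *m A *m PR) + PR *m B *m PR.
  by rewrite mulmxDr mulmxDl -scalemxAr -scalemxAl.
rewrite hS TR_lin.
move: (TR (PR *m A *m PR)) (TR (PR *m B *m PR)) => TA TB.
move: (PR *m A *m PR) (PR *m B *m PR) => ZA ZB.
by apply/matrixP => i j; rewrite !mxE; ring.
Qed.

HB.instance Definition _ := GRing.isLinear.Build C 'M[C]_n 'M[C]_n *:%R Ff Ff_lin.

Lemma TRsand Z : PR *m TR Z *m PR = TR Z.
Proof. exact: sandwich. Qed.

Lemma Ff_PR Y : PR *m Ff Y *m PR = PR *m Y *m PR - TR (PR *m Y *m PR).
Proof.
by rewrite /Ff mulmxDr mulmxDl !mulmxBr !mulmxBl sandwich TRsand subrr addr0.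
Qed.

Lemma Ff_inj (hG : GAS T PS) Y : Ff Y = 0 -> Y = 0.
Proof.
move=> h; have hZ : PR *m Y *m PR = 0.
  apply: uniq0 => //; first exact: sandwich.
  by rewrite -Ff_PR h mulmx0 mul0mx.
by move: h; rewrite /Ff hZ (lin0 TR_lin) !subr0 add0r.
Qed.

Lemma exists_sol (hG : GAS T PS) B : exists Y, Ff Y = B.
Proof.
have inj : forall v : 'rV[C]_(n * n), v *m lin_mx Ff = 0 -> v = 0.
  move=> v hv; have : Ff (vec_mx v) = 0.
    by apply/eqP; rewrite -mxvec_eq0 -mul_vec_lin vec_mxK hv.
  move/(Ff_inj hG) => h; apply/eqP; rewrite -[v]vec_mxK h.
  by rewrite mxvec_eq0.
have hL : lin_mx Ff \in unitmx by rewrite -row_free_unit; apply: inj_row_free.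
exists (vec_mx (mxvec B *m invmx (lin_mx Ff))).
apply: (can_inj mxvecK).
by rewrite -mul_vec_lin vec_mxK mulmxKV.
Qed.

Lemma main_res (hG : GAS T PS) : id_minus_TR_invertible T PR /\
  forall rho : 'M[C]_n, density rho -> forall i : 'I_K, forall X : 'M[C]_n,
  in_HR PR X -> X - TR X = PR *m rho *m PR ->
    cvg_to (fun m => \tr (P i *m iter m T rho))
      (\tr (P i *m (PS *m rho *m PS)) + \tr (P i *m T_SR T PS X)).
Proof.
split.
- move=> B [hBh hBs].
  have [Y hY] := exists_sol hG B.
  pose X := PR *m Y *m PR.
  have hXs : supported_in PR X := sandwich Y.
  have hX : X - TR X = B by rewrite -Ff_PR hY hBs.
  have uniqX : forall Y', supported_in PR Y' -> Y' - TR Y' = B -> Y' = X.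
    move=> Y' hs he; apply/eqP; rewrite -subr_eq0; apply/eqP; apply: uniq0 => //.
      by rewrite mulmxBr mulmxBl hs hXs.
    have e : Y' - X - TR (Y' - X) = (Y' - TR Y') - (X - TR X).
      rewrite (linB TR_lin); move: (TR Y') (TR X) => a b.
      by apply/matrixP => i j; rewrite !mxE; ring.
    by rewrite e he hX subrr.
  exists X; split.
  + split; last exact: hXs.
    rewrite /Defs.hermitian; apply: uniqX.
      rewrite /supported_in.
      have e : adj (PR *m X *m PR) = PR *m adj X *m PR.
        by rewrite !adjM PRH mulmxA.
      by rewrite -e hXs.
    by rewrite TR_adj -adjB hX hBh.
  + exact: hX.
  + by move=> Y' [_ hs] he; apply: uniqX.
- move=> rho hrho i X [_ hXs] hX.
  apply: cvg_of_null.
  have hg : null (fun m => gf i (iter m TR X)).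
    rewrite /gf /T_SR /kraus_map.
    apply: mx_null_tr; apply: mx_null_mull; apply: mx_null_mulr; apply: mx_null_mull.
    apply: (@mx_null_sum _ _ _ _ _ _ (fun M m => M *m iter m TR X *m adj M)) => M _.
    by apply: mx_null_mulr; apply: mx_null_mull; apply: goodR.
  apply: (null_ext _ (null_scale (-1) hg)) => m.
  rewrite (formula i hX) -tr0 /gf; ring.
Qed.

End Main.

Theorem proposition7 (C : numClosedFieldType) (n K : nat)
  (Ms : seq 'M[C]_n) (P : 'I_K -> 'M[C]_n) :
  kraus_TP Ms ->
  (forall i, orth_proj (P i)) ->
  (forall i j, i != j -> P i *m P j = 0) ->
  (forall i, invariant_subspace (kraus_map Ms) (P i)) ->
  let PS := \sum_(i < K) P i in
  let PR := 1%:M - PS in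
  GAS (kraus_map Ms) PS ->
  id_minus_TR_invertible (kraus_map Ms) PR /\
  forall rho : 'M[C]_n, density rho ->
  forall i : 'I_K,
  forall X : 'M[C]_n, in_HR PR X -> X - T_R (kraus_map Ms) PR X = PR *m rho *m PR ->
    cvg_to (fun m => \tr (P i *m iter m (kraus_map Ms) rho))
      (\tr (P i *m (PS *m rho *m PS)) + \tr (P i *m T_SR (kraus_map Ms) PS X)).
Proof.
move=> hTP hP hort hinv PS PR hG.
exact: (main_res hTP hP hort hinv (erefl PS) (erefl PR) hG).
Qed.
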